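(* Let $r,d,d_1\in\mathbb{N}$, $s_i\in\mathbb{N}$ for $i\in[r]$. Let $\mathcal{A}=\{\mathbf{a}^1,\dots,\mathbf{a}^r\}\subseteq\mathbb{Z}^d$ be linearly independent with some $\overline{\omega}\in\mathbb{Q}^d$ satisfying $\overline{\omega}\cdot\mathbf{a}^i=1$ for all $i$, and let $\mathcal{B}=\{\mathbf{b}^i_j:i\in[r],j\in[s_i]\}\subseteq\mathbb{Z}^{d_1}$ be a point configuration with a linear map $\pi_1:\mathbb{Z}^{d_1}\to\mathbb{Z}^d$ such that $\pi_1(\mathbf{b}^i_j)=\mathbf{a}^i$ for all $i,j$. Let $w$ be positive weights on $\mathcal{B}$ such that $(\mathcal{B},w)$ has rational linear precision, with blending functions $\{\beta^i_j\}$ satisfying the definition of rational linear precision, and let $P=\operatorname{conv}(\mathcal{B})$. For $i\in[r]$ let $P^i=\operatorname{conv}\{\mathbf{b}^i_j: j\in[s_i]\}$. Then for all $\mathbf{p}\in P^i$, \[\sum_{j\in[s_i]}\beta^i_j(\mathbf{p})=1.\]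
   Context: Scaled projective toric variety: for a finite point configuration $\mathcal{S}\subseteq\mathbb{Z}^n$ with positive weights $w=(w_{\mathbf{s}})$, $X_{\mathcal{S},w}$ is the Zariski closure of the image of $(\mathbb{C}^* )^n\to\mathbb{P}^{|\mathcal{S}|-1}$, $\mathbf{t}\mapsto[w_{\mathbf{s}}\mathbf{t}^{\mathbf{s}}]_{\mathbf{s}\in\mathcal{S}}$ (a row of ones is appended to the matrix of points if the all-ones vector is not in its row span). Rational linear precision: $(\mathcal{S},w)$, with $\Pi=\operatorname{conv}(\mathcal{S})$, has rational linear precision if there are rational functions $\{\hat\beta_{\mathbf{s}}\}_{\mathbf{s}\in\mathcal{S}}$ on $\mathbb{C}^n$ (blending functions) such that (1) $\sum_{\mathbf{s}}\hat\beta_{\mathbf{s}}=1$; (2) $(\hat\beta_{\mathbf{s}})_{\mathbf{s}}:\mathbb{C}^n\dashrightarrow X_{\mathcal{S},w}$ is a rational parametrization of $X_{\mathcal{S},w}$; (3) for every $\mathbf{p}$ in the relative interior of $\Pi$, each $\hat\beta_{\mathbf{s}}(\mathbf{p})$ is defined and a nonnegative real number; (4) $\sum_{\mathbf{s}}\hat\beta_{\mathbf{s}}(\mathbf{p})\,\mathbf{s}=\mathbf{p}$ for all $\mathbf{p}\in\Pi$. *)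

(* Defs.v *)
From HB Require Import structures.
From mathcomp Require Import all_boot all_order all_algebra.
From mathcomp Require Import complex.
From mathcomp Require Import mpoly.

Set Implicit Arguments.
Unset Strict Implicit.
Unset Printing Implicit Defensive.

Import Order.TTheory GRing.Theory Num.Theory.
Local Open Scope ring_scope.

(* A rational function is represented by a numerator/denominator pair of    *)
(* polynomials (denominator nonzero); two pairs represent the same rational *)
(* function when they are cross-multiplication equal.                       *)

Record ratfun (R : rcfType) (n : nat) :=
  RatFun { rf_num : {mpoly R[i][n]}; rf_den : {mpoly R[i][n]} }.

Definition rf_wf (R : rcfType) (n : nat) (f : ratfun R n) : Prop :=
  rf_den f != 0.

Definition rf_eq (R : rcfType) (n : nat) (f g : ratfun R n) : Prop :=
  rf_num f * rf_den g = rf_num g * rf_den f.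

Definition rf_add (R : rcfType) (n : nat) (f g : ratfun R n) : ratfun R n :=
  RatFun (rf_num f * rf_den g + rf_num g * rf_den f) (rf_den f * rf_den g).

Definition rf_zero (R : rcfType) (n : nat) : ratfun R n := RatFun 0 1.
Definition rf_one (R : rcfType) (n : nat) : ratfun R n := RatFun 1 1.

(* [rf_value f x v] : the rational function f is defined (regular) at the
   point x of C^n and its value there is v, i.e. f admits a representative
   a/b with b(x) <> 0 and v = a(x)/b(x). *)
Definition rf_value (R : rcfType) (n : nat) (f : ratfun R n)
    (x : 'I_n -> R[i]) (v : R[i]) : Prop :=
  exists (a b : {mpoly R[i][n]}),
    [/\ b != 0, a * rf_den f = rf_num f * b, b.@[x] != 0 & v = a.@[x] / b.@[x]].

Definition intpt (R : rcfType) (n : nat) (s : 'rV[int]_n) : 'rV[R]_n :=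
  map_mx (fun z : int => z%:~R) s.

Definition realpt (R : rcfType) (n : nat) (p : 'rV[R]_n) : 'I_n -> R[i] :=
  fun k => (p 0 k)%:C%C.

Definition in_conv (R : rcfType) (n : nat) (I : finType) (S : I -> 'rV[R]_n)
    (p : 'rV[R]_n) : Prop :=
  exists lam : I -> R,
    [/\ forall t, 0 <= lam t, \sum_t lam t = 1 & p = \sum_t lam t *: S t].

Definition in_aff (R : rcfType) (n : nat) (I : finType) (S : I -> 'rV[R]_n)
    (q : 'rV[R]_n) : Prop :=
  exists lam : I -> R, \sum_t lam t = 1 /\ q = \sum_t lam t *: S t.

Definition in_relint (R : rcfType) (n : nat) (I : finType) (S : I -> 'rV[R]_n)
    (p : 'rV[R]_n) : Prop :=
  in_conv S p /\
  exists e : R, 0 < e /\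
    forall q, in_aff S q -> (forall k, `|q 0 k - p 0 k| < e) -> in_conv S q.

(* The scaled projective toric variety X_{S,w} in P^{|S|-1}.                *)
(* Homogeneous coordinates are indexed by T (the index type of the point    *)
(* configuration, injectively indexed); polynomials on C^{|T|} are          *)
(* {mpoly R[i][#|T|]} and coordinate k corresponds to enum_val k.           *)
(* The Zariski closure of the image of the torus in P^{|S|-1} is described  *)
(* by its ideal: the polynomials vanishing on the affine cone over the      *)
(* image.  A rational map into X is a rational parametrization of X iff the *)
(* Zariski closure of its image equals X, i.e. iff a polynomial vanishes on *)
(* the cone over its image exactly when it vanishes on the cone over the    *)
(* torus image.                                                             *)

Definition coords (R : rcfType) (T : finType) (x : T -> R[i]) : 'I_#|T| -> R[i] :=
  fun k => x (enum_val k).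

(* the point  lam * (w_s t^s)_s  of the affine cone over the torus image *)
Definition toric_pt (R : rcfType) (n : nat) (T : finType) (S : T -> 'rV[int]_n)
    (w : T -> R) (lam : R[i]) (t : 'I_n -> R[i]) : T -> R[i] :=
  fun s => lam * (w s)%:C%C * \prod_(k < n) t k ^ (S s 0 k).

Definition vanishes_on_toric (R : rcfType) (n : nat) (T : finType)
    (S : T -> 'rV[int]_n) (w : T -> R) (f : {mpoly R[i][#|T|]}) : Prop :=
  forall (lam : R[i]) (t : 'I_n -> R[i]),
    lam != 0 -> (forall k, t k != 0) -> f.@[coords (toric_pt S w lam t)] = 0.

Definition vanishes_on_image (R : rcfType) (n : nat) (T : finType)
    (beta : T -> ratfun R n) (f : {mpoly R[i][#|T|]}) : Prop :=
  forall (lam : R[i]) (x : 'I_n -> R[i]) (v : T -> R[i]),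
    lam != 0 -> (forall s, rf_value (beta s) x (v s)) ->
    f.@[coords (fun s => lam * v s)] = 0.

Definition rational_parametrization (R : rcfType) (n : nat) (T : finType)
    (S : T -> 'rV[int]_n) (w : T -> R) (beta : T -> ratfun R n) : Prop :=
  forall f : {mpoly R[i][#|T|]},
    vanishes_on_toric S w f <-> vanishes_on_image beta f.

(* S is a point configuration injectively indexed by the finite type T.     *)

Definition has_RLP (R : rcfType) (n : nat) (T : finType)
    (S : T -> 'rV[int]_n) (w : T -> R) (beta : T -> ratfun R n) : Prop :=
  [/\
      forall s, rf_wf (beta s),
      rf_eq (\big[@rf_add R n/rf_zero R n]_s beta s) (rf_one R n),
      rational_parametrization S w beta,
      (forall p : 'rV[R]_n, in_relint (fun s => intpt R (S s)) p ->
         forall s, exists x : R, 0 <= x /\ rf_value (beta s) (realpt p) (x%:C%C))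
    &
      (forall p : 'rV[R]_n, in_conv (fun s => intpt R (S s)) p ->
         exists v : T -> R[i],
           (forall s, rf_value (beta s) (realpt p) (v s)) /\
           (forall k, \sum_s v s * ((S s 0 k)%:~R) = realpt p k))].

(* Main.v *)
Require Import Defs.
From HB Require Import structures.
From mathcomp Require Import all_boot all_order all_algebra.
From mathcomp Require Import complex.
From mathcomp Require Import mpoly.

Import Order.TTheory GRing.Theory Num.Theory.
Local Open Scope ring_scope.

Lemma indep_C (R : rcfType) (r d : nat) (a : 'I_r -> 'rV[int]_d) :
  (forall c : 'I_r -> rat,
      \sum_i c i *: map_mx (fun z : int => z%:~R) (a i) = 0 -> forall i, c i = 0) ->
  forall c : 'rV[R[i]]_r,
    c *m (\matrix_(i, l) ((a i 0 l)%:~R : R[i])) = 0 -> c = 0.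
Proof.
move=> Hind c Hc.
pose AQ : 'M[rat]_(r, d) := \matrix_(i, l) (a i 0 l)%:~R.
have HQ : forall u : 'rV[rat]_r, u *m AQ = 0 -> u = 0.
  move=> u Hu; apply/rowP => k; rewrite mxE; apply: (Hind (fun i => u 0 i)) => //.
  transitivity (u *m AQ); last exact: Hu.
  rewrite mulmx_sum_row; apply: eq_bigr => i _; congr (_ *: _).
  by apply/rowP => l; rewrite !mxE.
have rfQ : row_free AQ.
  rewrite -kermx_eq0; apply/eqP/matrixP => k m.
  have := HQ (row k (kermx AQ)); rewrite -row_mul mulmx_ker row0 => /(_ erefl) /rowP /(_ m).
  by rewrite !mxE.
have Heq : (\matrix_(i, l) ((a i 0 l)%:~R : R[i])) = map_mx (@ratr R[i]) AQ.
  by apply/matrixP => i l; rewrite !mxE rmorph_int.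
rewrite Heq in Hc.
have rfC : row_free (map_mx (@ratr R[i]) AQ) by rewrite row_free_map.
apply: (row_free_inj rfC); by rewrite Hc mul0mx.
Qed.

Theorem lemma3p4 (R : rcfType) (r d d1 : nat) (s : 'I_r -> nat)
    (a : 'I_r -> 'rV[int]_d)
    (b : {i : 'I_r & 'I_(s i)} -> 'rV[int]_d1)
    (w : {i : 'I_r & 'I_(s i)} -> R)
    (beta : {i : 'I_r & 'I_(s i)} -> ratfun R d1) :
  (forall c : 'I_r -> rat,
      \sum_i c i *: map_mx (fun z : int => z%:~R) (a i) = 0 -> forall i, c i = 0) ->
  (exists omega : 'rV[rat]_d,
      forall i, \sum_(k < d) omega 0 k * (a i 0 k)%:~R = 1) ->
  injective b ->
  (exists pi1 : 'M[int]_(d1, d), forall i (j : 'I_(s i)), b (existT _ i j) *m pi1 = a i) ->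
  (forall t, 0 < w t) ->
  has_RLP b w beta ->
  forall (i : 'I_r) (p : 'rV[R]_d1),
    in_conv (fun j : 'I_(s i) => intpt R (b (existT _ i j))) p ->
    exists v : 'I_(s i) -> R[i],
      (forall j, rf_value (beta (existT _ i j)) (realpt p) (v j)) /\
      \sum_j v j = 1.
Proof.
move=> Hind _ _ [pi1 Hpi] _ [_ _ _ _ Hprec] i p [lam [lam0 lam1 Hp]].
pose e := fun j : 'I_(s i) => (existT (fun i0 : 'I_r => 'I_(s i0)) i j : {i : 'I_r & 'I_(s i)}).
pose lam' := fun x : {i : 'I_r & 'I_(s i)} =>
  \sum_(j : 'I_(s i)) (if x == e j then lam j else 0).
have Hconv : in_conv (fun x => intpt R (b x)) p.
  exists lam'; split.
  - move=> x; apply: sumr_ge0 => j _; case: ifP => // _; exact: lam0.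
  - rewrite exchange_big /= -lam1; apply: eq_bigr => j _.
    by rewrite -big_mkcond /= big_pred1_eq.
  - rewrite Hp; symmetry.
    transitivity (\sum_x \sum_j (if x == e j then lam j else 0) *: intpt R (b x)).
      by apply: eq_bigr => x _; rewrite scaler_suml.
    rewrite exchange_big /=; apply: eq_bigr => j _.
    under eq_bigr do rewrite (fun_if (fun c => c *: _)) scale0r.
    by rewrite -big_mkcond /= big_pred1_eq.
have [v [Hv Hsum]] := Hprec p Hconv.
exists (fun j => v (e j)); split => //.
pose E := fun (i' : 'I_r) (j : 'I_(s i')) => (existT (fun i0 : 'I_r => 'I_(s i0)) i' j : {i : 'I_r & 'I_(s i)}).
pose c : 'rV[R[i]]_r := \row_i' (\sum_(j : 'I_(s i')) v (E i' j) - (i' == i)%:R).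
suff: c = 0.
  by move=> /rowP /(_ i); rewrite !mxE eqxx => /eqP; rewrite subr_eq0 => /eqP.
apply: (@indep_C R r d a Hind); apply/rowP => l; rewrite !mxE.
under eq_bigr do rewrite !mxE mulrBl mulr_suml.
rewrite sumrB.
under [X in _ - X]eq_bigr do rewrite mulr_natl mulrb.
rewrite -big_mkcond big_pred1_eq.
apply/eqP; rewrite subr_eq0; apply/eqP.
have key : forall x : {i : 'I_r & 'I_(s i)},
    ((a (tag x) 0 l)%:~R : R[i]) = \sum_k (b x 0 k)%:~R * (pi1 k l)%:~R.
  case=> i' j /=; rewrite -(Hpi i' j) mxE rmorph_sum; apply: eq_bigr => k _.
  by rewrite rmorphM.
transitivity (\sum_x v x * (a (tag x) 0 l)%:~R).
  rewrite (sig_big_dep (fun _ => true) (fun _ _ => true)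
    (fun i' j => v (E i' j) * (a i' 0 l)%:~R)) /=.
  by apply: eq_bigr => -[i' j] _.
under eq_bigr do rewrite key mulr_sumr.
rewrite exchange_big /=.
transitivity (\sum_k (realpt p k) * (pi1 k l)%:~R).
  apply: eq_bigr => k _; rewrite -Hsum mulr_suml; apply: eq_bigr => x _.
  by rewrite mulrA.
rewrite /realpt Hp.
under eq_bigr => k _ do rewrite summxE rmorph_sum mulr_suml.
rewrite exchange_big /=.
transitivity (\sum_j ((lam j)%:C)%C * (a i 0 l)%:~R).
  apply: eq_bigr => j _.
  rewrite (key (e j)) mulr_sumr; apply: eq_bigr => k _.
  by rewrite !mxE rmorphM rmorph_int mulrA.
by rewrite -mulr_suml -rmorph_sum lam1 rmorph1 mul1r.
Qed.
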